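(* Let $n\geq 5$, let $S$ be the set of all $3$-cycles in $S_n$, and let $CAG_n=\mathrm{Cay}(A_n,S)$. Let $G_e$ be the set of automorphisms of $CAG_n$ fixing the identity vertex $e$. Let $g\in G_e$ and $\alpha,\beta\in S$ (not necessarily distinct). If $\alpha^g=\beta$, then $(\alpha^{-1})^g=\beta^{-1}$.
   Context: For a finite group $\Gamma$ and a subset $T\subseteq\Gamma$ with $e\notin T$ and $T=T^{-1}$, the Cayley graph $\mathrm{Cay}(\Gamma,T)$ is the undirected graph with vertex set $\Gamma$ and edge set $\{\{\gamma,t\gamma\}\mid \gamma\in\Gamma, t\in T\}$. $x^g$ denotes the image of the vertex $x$ under the automorphism $g$. *)

(* Defs.v *)
From mathcomp Require Import all_boot all_fingroup all_solvable.
Set Implicit Arguments. Unset Strict Implicit. Unset Printing Implicit Defensive.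
Local Open Scope group_scope.

Definition is_3cycle (n : nat) (s : 'S_n) : Prop :=
  exists a b c : 'I_n,
    [/\ a != b, b != c & a != c] /\
    [/\ s a = b, s b = c & s c = a] /\
    (forall x, x != a -> x != b -> x != c -> s x = x).

Definition three_cycles (n : nat) : 'S_n -> Prop := fun s => is_3cycle s.

Definition vert (n : nat) := {x : 'S_n | x \in ('Alt_('I_n))}.

Definition cag_adj (n : nat) (x y : vert n) : Prop :=
  exists t : 'S_n, three_cycles t /\ val y = t * val x.

Definition is_cag_aut (n : nat) (g : {perm vert n}) : Prop :=
  forall x y : vert n, cag_adj (g x) (g y) <-> cag_adj x y.

(* Main.v *)
Require Import Defs.
From mathcomp Require Import all_boot all_fingroup all_solvable.
Set Implicit Arguments. Unset Strict Implicit. Unset Printing Implicit Defensive.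
Local Open Scope group_scope.

Section C3.
Variable n : nat.
Implicit Types a b c p q r x y : 'I_n.

Lemma tpermE' x y z : tperm x y z = if z == x then y else if z == y then x else z.
Proof. by case: tpermP => [->|->|/eqP/negbTE-> /eqP/negbTE->]; rewrite ?eqxx //; case: eqP => [->|]. Qed.

Definition c3 a b c : 'S_n := tperm a b * tperm a c.

Ltac dec := repeat (first
 [ rewrite eqxx /=
 | match goal with
   | H : is_true (?x != ?y) |- context [?x == ?y] => rewrite (negbTE H) /=
   | H : is_true (?y != ?x) |- context [?x == ?y] => rewrite [x == y]eq_sym (negbTE H) /=
   end ]).

Ltac crush := dec; try done;
  repeat (match goal with
    | H : is_true (?z != ?z) |- _ => by rewrite eqxx in H
    | |- context [?u == ?x] => is_var u; is_var x; case: (eqVneq u x) => [?|?]; [subst|]; dec end; try done).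

Lemma c3E a b c v : c3 a b c v = tperm a c (tperm a b v).
Proof. by rewrite /c3 permM. Qed.

Ltac ev := rewrite ?permM ?c3E ?perm1 ?tpermE'.

Lemma is3_c3 a b c : a != b -> b != c -> a != c -> is_3cycle (c3 a b c).
Proof.
move=> ab bc ac; exists a, b, c; split; first by split.
split; first by split; ev; crush.
by move=> v va vb vc; ev; crush.
Qed.

Lemma is3E (s : 'S_n) : is_3cycle s -> exists a b c, [/\ a != b, b != c & a != c] /\ s = c3 a b c.
Proof.
move=> [a [b [c [[ab bc ac] [[sa sb sc] so]]]]].
exists a, b, c; split => //; apply/permP => v.
case: (eqVneq v a) => [->|va]; first by rewrite sa; ev; crush.
case: (eqVneq v b) => [->|vb]; first by rewrite sb; ev; crush.
case: (eqVneq v c) => [->|vc]; first by rewrite sc; ev; crush.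
by rewrite so //; ev; crush.
Qed.

Lemma c3V a b c : (c3 a b c)^-1 = c3 a c b.
Proof. by rewrite /c3 invMg !tpermV. Qed.

Lemma c3_even a b c : a != b -> a != c -> c3 a b c \in 'Alt_('I_n).
Proof. by move=> ab ac; rewrite Alt_even /c3 odd_permM !odd_tperm ab ac. Qed.

Lemma is3_even (s : 'S_n) : is_3cycle s -> s \in 'Alt_('I_n).
Proof. by case/is3E=> [a [b [c [[ab bc ac] ->]]]]; apply: c3_even. Qed.

Lemma is3_moved (s : 'S_n) x : is_3cycle s -> s x != x ->
  exists a b c, [/\ a != b, b != c & a != c] /\ s = c3 a b c /\ [|| x == a, x == b | x == c].
Proof.
case/is3E=> [a [b [c [[ab bc ac] ->]]]] m; exists a, b, c; do 2!split => //.
move: m; ev; crush.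
Qed.

Lemma NM4 (s : 'S_n) x1 x2 x3 x4 : is_3cycle s ->
  x1 != x2 -> x1 != x3 -> x1 != x4 -> x2 != x3 -> x2 != x4 -> x3 != x4 ->
  s x1 != x1 -> s x2 != x2 -> s x3 != x3 -> s x4 != x4 -> False.
Proof.
case/is3E=> [a [b [c [[ab bc ac] ->]]]] d12 d13 d14 d23 d24 d34.
have mv v : c3 a b c v != v -> [|| v == a, v == b | v == c] by ev; crush.
move/mv=> h1 /mv h2 /mv h3 /mv h4.
by case/or3P: h1 => /eqP ?; case/or3P: h2 => /eqP ?; case/or3P: h3 => /eqP ?;
   case/or3P: h4 => /eqP ?; subst; rewrite ?eqxx in d12 d13 d14 d23 d24 d34.
Qed.

Lemma not3_one (s : 'S_n) : is_3cycle s -> s = 1 -> False.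
Proof.
case/is3E=> [a [b [c [[ab bc ac] ->]]]] /permP /(_ a); ev => /eqP; crush.
Qed.


Ltac nm4 H := match goal with x1 : 'I_?m, x2 : 'I_?m, x3 : 'I_?m, x4 : 'I_?m |- _ =>
   apply: (NM4 (x1:=x1) (x2:=x2) (x3:=x3) (x4:=x4) H);
   solve [ by [] | by rewrite eq_sym | ev; crush ] end.

Ltac idf H := solve [apply: (not3_one H); apply/permP => v; ev; crush].

Ltac loc p a b c := case: (eqVneq p a) => [?|?]; [subst p|case: (eqVneq p b) => [?|?]; [subst p|case: (eqVneq p c) => [?|?]; [subst p|]]].

Lemma U1 a b c p q r : a != b -> b != c -> a != c -> p != q -> q != r -> p != r ->
  is_3cycle (c3 p q r * c3 a c b) -> is_3cycle (c3 p q r * c3 a b c) -> False.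
Proof.
move=> ab bc ac pq qr pr H1 H2.
loc p a b c; loc q a b c; loc r a b c;
  rewrite ?eqxx in ab bc ac pq qr pr;
  first [ done | idf H1 | idf H2 | nm4 H1 | nm4 H2 ].
Qed.

Lemma fresh4 (Hn : 5 <= n) x y t d : exists e : 'I_n, [/\ e != x, e != y, e != t & e != d].
Proof.
have : ~~ ([set: 'I_n] \subset [:: x; y; t; d]).
  apply/negP => /subset_leq_card; rewrite cardsT card_ord.
  move/leq_trans/(_ (card_size [:: x; y; t; d])) => /= h.
  by move: (leq_trans Hn h).
case/subsetPn => e _; rewrite !inE !negb_or => /and4P [ex ey et ed].
by exists e.
Qed.

Lemma G (Hn : 5 <= n) x y t d (B W : 'S_n) : x != y -> y != t -> x != t ->
  d != x -> d != y -> d != t -> B = c3 x t y -> W = c3 x y d ->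
  exists z : 'S_n, is_3cycle z /\ is_3cycle (z * B) /\ is_3cycle (z * W^-1).
Proof.
move=> xy yt xt dx dy dt -> ->.
have [e [ex ey et ed]] := fresh4 Hn x y t d.
exists (c3 x y e); split; first by apply: is3_c3 => //; rewrite eq_sym.
split.
  have -> : c3 x y e * c3 x t y = c3 y e t by apply/permP => v; ev; crush.
  by apply: is3_c3; rewrite // eq_sym.
have -> : c3 x y e * (c3 x y d)^-1 = c3 y e d by rewrite c3V; apply/permP => v; ev; crush.
by apply: is3_c3; rewrite // eq_sym.
Qed.
Ltac gsolve := solve [ by [] | by rewrite eq_sym | apply/permP => v; ev; crush ].
Ltac gtac Hn a b c := match goal with d : 'I_?m |- _ =>
  first [ apply: (G (x:=a) (y:=b) (t:=c) (d:=d) Hn); gsolve | apply: (G (x:=b) (y:=c) (t:=a) (d:=d) Hn); gsolve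
        | apply: (G (x:=c) (y:=a) (t:=b) (d:=d) Hn); gsolve ] end.

Lemma L2 (Hn : 5 <= n) a b c p q r : a != b -> b != c -> a != c -> p != q -> q != r -> p != r ->
  is_3cycle (c3 p q r * c3 a c b) -> c3 p q r != c3 a c b ->
  exists z : 'S_n, is_3cycle z /\ is_3cycle (z * c3 a c b) /\ is_3cycle (z * (c3 p q r)^-1).
Proof.
move=> ab bc ac pq qr pr H1 Hne.
loc p a b c; loc q a b c; loc r a b c;
  rewrite ?eqxx in ab bc ac pq qr pr;
  first [ done | solve [exfalso; idf H1] | solve [exfalso; nm4 H1]
        | solve [exfalso; move/eqP: Hne; apply; apply/permP => v; ev; crush]
        | gtac Hn a b c ].
Qed.
Lemma c3sq a b c : a != b -> b != c -> a != c -> c3 a c b * c3 a c b = c3 a b c.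
Proof. by move=> ab bc ac; apply/permP => v; ev; crush. Qed.
End C3.

Lemma adjE n (x y : vert n) : cag_adj x y <-> is_3cycle (val y * (val x)^-1).
Proof.
split; first by case=> t [Ht ->]; rewrite mulgK.
by move=> H; exists (val y * (val x)^-1); split => //; rewrite mulgKV.
Qed.

Theorem lemma3p3 (n : nat) (Hn : 5 <= n) (g : {perm vert n})
  (Hg : is_cag_aut g)
  (He : forall e : vert n, val e = 1 -> g e = e)
  (alpha beta : vert n)
  (Ha : three_cycles (val alpha)) (Hb : three_cycles (val beta))
  (Hab : g alpha = beta)
  (alphai betai : vert n)
  (Hai : val alphai = (val alpha)^-1) (Hbi : val betai = (val beta)^-1) :
  g alphai = betai.
Proof.
pose e0 : vert n := exist _ (1 : 'S_n) (group1 _).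
have ge0 : g e0 = e0 by apply: He.
pose P (a w : vert n) := cag_adj e0 w /\ cag_adj a w /\
   ~ (exists z, cag_adj e0 z /\ cag_adj a z /\ cag_adj w z).
have P1 : P alpha alphai.
  have [a [b [c [[ab bc ac] Ea]]]] := is3E Ha.
  have Eai : val alphai = c3 a c b by rewrite Hai Ea c3V.
  split; first by apply/adjE; rewrite /= invg1 mulg1 Eai; apply: is3_c3; rewrite // eq_sym.
  split.
    apply/adjE; rewrite Eai Ea c3V.
    rewrite c3sq //.
    exact: is3_c3.
  case=> z [/adjE Hz1 [/adjE Hz2 /adjE Hz3]].
  move: Hz1 Hz2 Hz3; rewrite /= invg1 mulg1 Eai Ea c3V => Hz1.
  have [p [q [r [[pq qr pr] Ez]]]] := is3E Hz1.
  rewrite Ez c3V => H1 H2.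
  exact: (U1 ab bc ac pq qr pr H1 H2).
have P2 : P beta (g alphai).
  case: P1 => [A1 [A2 A3]].
  split; first by rewrite -ge0; apply/Hg.
  split; first by rewrite -Hab; apply/Hg.
  case=> z [Z1 [Z2 Z3]]; apply: A3; exists (g^-1 z).
  have gz : g (g^-1 z) = z by rewrite permKV.
  rewrite -ge0 -gz in Z1; rewrite -Hab -gz in Z2; rewrite -gz in Z3.
  by split; [apply/Hg | split; apply/Hg].
apply: val_inj; rewrite Hbi.
case: P2 => [B1 [B2 B3]].
have [a [b [c [[ab bc ac] Eb]]]] := is3E Hb.
move/adjE: B1; rewrite /= invg1 mulg1 => B1.
have [p [q [r [[pq qr pr] Ew]]]] := is3E B1.
have Ew2 : val (g alphai) = c3 p q r := Ew.
move/adjE: B2; rewrite Ew2 Eb c3V => B2.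
rewrite Ew2 Eb c3V.
apply/eqP; apply/negPn/negP => Hne.
have [z [Z1 [Z2 Z3]]] := L2 Hn ab bc ac pq qr pr B2 Hne.
apply: B3; exists (exist _ z (is3_even Z1)).
split; first by apply/adjE; rewrite /= invg1 mulg1.
split; first by apply/adjE; rewrite /= Eb c3V.
by apply/adjE; rewrite Ew2.
Qed.
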